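(* Let $C_{n_1},C_{n_2},\dots,C_{n_k}$ be any finite sequence of nested commutators, where $C_{n_j}$ is a grade-$n_j$ commutator $[U_{n_j},[U_{n_j-1},\dots,[U_2,U_1]\dots]]$ with each $U_i$ equal to $h\partial_x^2$ or $h^{-1}V(x)$ ($V$ smooth), and let $O_q=y_q(x)h^q\partial_x^q$ with $y_q$ smooth. Define $$W_k=[C_{n_k},[C_{n_{k-1}},\dots,[C_{n_1},O_q]\dots]].$$ Then $\mathrm{ht}(W_k)\le\mathrm{wd}(W_k)$.
   Context: $\mathcal{L}_h$ is the set of differential operators $\sum_{k=0}^n y_k(x)h^{m_k}\partial_x^{d_k}$ ($n,d_k\in\mathbb{N}$, $m_k\in\mathbb{Z}$, $y_k$ smooth). For $P\in\mathcal{L}_h$: $\mathrm{ht}(P)=\max\{d: h^m\partial_x^d\text{ appears in }P\}$, $\mathrm{wd}(P)=\min\{m: h^m\partial_x^d\text{ appears in }P\}$, with $\mathrm{ht}(0)=0$, $\mathrm{wd}(0)=\infty$. *)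

(* Defs.v *)
From Stdlib Require Import Reals ZArith List Arith ClassicalEpsilon.
From Coquelicot Require Import Coquelicot.
Import ListNotations.
Open Scope R_scope.

Definition smooth (f : R -> R) : Prop := forall (n : nat) (x : R), ex_derive_n f n x.

(** A monomial  y(x) h^m d_x^d  is encoded as (y, m, d). *)
Definition mono : Type := ((R -> R) * Z * nat)%type.

(** An element of L_h: a finite formal sum of monomials.  Terms with the same
    (m, d) are collected by [coef]. *)
Definition op : Type := list mono.

(** Product of monomials via the Leibniz rule:
    (y h^m d^d)(z h^n d^e) = h^(m+n) sum_{j<=d} C(d,j) y z^(j) d^(d-j+e). *)
Definition mono_mul (a b : mono) : op :=
  let '(y, m, d) := a in
  let '(z, n, e) := b in
  map (fun j => ((fun x => Binomial.C d j * y x * Derive_n z j x),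
                 (m + n)%Z, (d - j + e)%nat))
      (seq 0 (S d)).

Definition op_mul (P Q : op) : op :=
  flat_map (fun a => flat_map (fun b => mono_mul a b) Q) P.

Definition op_opp (P : op) : op :=
  map (fun '(y, m, d) => ((fun x => - y x), m, d)) P.

Definition comm (P Q : op) : op := op_mul P Q ++ op_opp (op_mul Q P).

Definition coef (P : op) (m : Z) (d : nat) (x : R) : R :=
  fold_right (fun '(y, m', d') acc =>
                if (Z.eqb m m' && Nat.eqb d d')%bool then y x + acc else acc)
             0 P.

Definition appears (P : op) (m : Z) (d : nat) : Prop := exists x, coef P m d x <> 0.

(** ht(P) = max{d : h^m d^d appears in P}, with ht(0) = 0. *)
Definition ht (P : op) : nat :=
  fold_right (fun '(_, m, d) acc =>
                if excluded_middle_informative (appears P m d)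
                then Nat.max d acc else acc) 0%nat P.

(** wd(P) = min{m : h^m d^d appears in P}; None encodes +infinity (wd(0)). *)
Definition wd (P : op) : option Z :=
  fold_right (fun '(_, m, d) acc =>
                if excluded_middle_informative (appears P m d)
                then match acc with
                     | None => Some m
                     | Some w => Some (Z.min m w)
                     end
                else acc) None P.

Definition ht_le_wd (n : nat) (w : option Z) : Prop :=
  match w with None => True | Some w => (Z.of_nat n <= w)%Z end.

(** The generators: true ↦ h d_x^2, false ↦ h^{-1} V(x). *)
Definition U (V : R -> R) (b : bool) : op :=
  if b then [((fun _ => 1), 1%Z, 2%nat)] else [(V, (-1)%Z, 0%nat)].

(** Nested commutator [U_n,[U_{n-1},...,[U_2,U_1]...]] from the list
    [U_1; U_2; ...; U_n] (given as booleans). *)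
Definition nested_comm (V : R -> R) (us : list bool) : op :=
  match us with
  | [] => []
  | u1 :: rest => fold_left (fun acc b => comm (U V b) acc) rest (U V u1)
  end.

Definition Oq (q : nat) (yq : R -> R) : op := [(yq, Z.of_nat q, q)].

(** W_k = [C_{n_k},[C_{n_{k-1}},...,[C_{n_1},O_q]...]], with Cs = [C_1;...;C_k]. *)
Definition Wk (V : R -> R) (Cs : list (list bool)) (q : nat) (yq : R -> R) : op :=
  fold_left (fun W us => comm (nested_comm V us) W) Cs (Oq q yq).

(* Main.v *)
Require Import Defs.
From Stdlib Require Import Reals ZArith List Arith Permutation Lia Lra FunctionalExtensionality ClassicalEpsilon.
From Coquelicot Require Coquelicot.
Import ListNotations.
Open Scope R_scope.
Module Aux.
Import Coquelicot.Coquelicot.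
Open Scope R_scope.
Import ListNotations.

Lemma perm_flat_map_ext {A B} (f g : A -> list B) l :
  (forall a, Permutation (f a) (g a)) -> Permutation (flat_map f l) (flat_map g l).
Proof. intros H; induction l; simpl; auto. apply Permutation_app; auto. Qed.

Lemma perm_flat_map_app {A B} (f g : A -> list B) l :
  Permutation (flat_map (fun a => f a ++ g a) l) (flat_map f l ++ flat_map g l).
Proof.
  induction l; simpl; auto.
  rewrite <- !app_assoc. apply Permutation_app_head.
  eapply perm_trans. apply Permutation_app_head. exact IHl.
  rewrite !app_assoc. apply Permutation_app_tail. apply Permutation_app_comm.
Qed.

Lemma perm_swap2 {A B C} (f : A -> B -> C) P Q :
  Permutation (flat_map (fun a => flat_map (fun b => (f a b :: nil)) Q) P)
              (flat_map (fun b => flat_map (fun a => (f a b :: nil)) P) Q).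
Proof.
  induction P as [|a P IH]; simpl.
  - induction Q; simpl; auto.
  - eapply perm_trans. apply Permutation_app_head. exact IH.
    symmetry. apply (perm_flat_map_app (fun b => (f a b :: nil)) (fun b => flat_map (fun a0 => (f a0 b :: nil)) P)).
Qed.

Lemma op_mul_perm_l P P' Q : Permutation P P' -> Permutation (op_mul P Q) (op_mul P' Q).
Proof. intros H. unfold op_mul. now apply Permutation_flat_map. Qed.

Lemma op_mul_perm_r P Q Q' : Permutation Q Q' -> Permutation (op_mul P Q) (op_mul P Q').
Proof. intros H. unfold op_mul. apply perm_flat_map_ext. intros a. now apply Permutation_flat_map. Qed.

Lemma op_mul_app_l A B Q : op_mul (A ++ B) Q = op_mul A Q ++ op_mul B Q.
Proof. unfold op_mul. apply flat_map_app. Qed.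

Lemma op_mul_app_r P A B : Permutation (op_mul P (A ++ B)) (op_mul P A ++ op_mul P B).
Proof.
  unfold op_mul. eapply perm_trans. 2: apply perm_flat_map_app.
  apply perm_flat_map_ext. intros a. rewrite flat_map_app. auto.
Qed.

Lemma op_opp_app A B : op_opp (A ++ B) = op_opp A ++ op_opp B.
Proof. unfold op_opp. apply map_app. Qed.

Lemma op_opp_flat_map {T} (f : T -> op) l : op_opp (flat_map f l) = flat_map (fun a => op_opp (f a)) l.
Proof. induction l; simpl; auto. rewrite op_opp_app. congruence. Qed.

Lemma op_opp_opp A : op_opp (op_opp A) = A.
Proof.
  induction A as [|[[y m] d] A IH]; simpl; auto. rewrite IH.
  replace (fun x => - - y x) with y; auto. apply functional_extensionality; intros; lra.
Qed.

Lemma mono_mul_opp_l y m d b : mono_mul ((fun x => - y x), m, d) b = op_opp (mono_mul (y,m,d) b).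
Proof.
  destruct b as [[z n] e]. unfold mono_mul, op_opp. rewrite map_map. apply map_ext.
  intros j. f_equal. f_equal. apply functional_extensionality; intros; lra.
Qed.

Lemma mono_mul_opp_r a z n e : mono_mul a ((fun x => - z x), n, e) = op_opp (mono_mul a (z,n,e)).
Proof.
  destruct a as [[y m] d]. unfold mono_mul, op_opp. rewrite map_map. apply map_ext.
  intros j. f_equal. f_equal. apply functional_extensionality; intros x.
  rewrite Derive_n_opp. lra.
Qed.

Lemma op_mul_opp_l A Q : op_mul (op_opp A) Q = op_opp (op_mul A Q).
Proof.
  unfold op_mul. rewrite op_opp_flat_map. induction A as [|[[y m] d] A IH]; simpl; auto.
  f_equal; auto. rewrite op_opp_flat_map. apply flat_map_ext. intros b. apply mono_mul_opp_l.
Qed.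

Lemma op_mul_opp_r P B : op_mul P (op_opp B) = op_opp (op_mul P B).
Proof.
  unfold op_mul. rewrite op_opp_flat_map. apply flat_map_ext. intros a.
  rewrite op_opp_flat_map.
  induction B as [|[[z n] e] B IH]; simpl; auto. f_equal; auto. apply mono_mul_opp_r.
Qed.

Definition Null (X : op) := exists L, Permutation X (L ++ op_opp L).

Lemma Null_nil : Null nil.
Proof. exists nil. simpl. auto. Qed.

Lemma Null_perm X Y : Permutation X Y -> Null X -> Null Y.
Proof. intros H [L HL]. exists L. eapply perm_trans. symmetry; eauto. auto. Qed.

Lemma Null_app X Y : Null X -> Null Y -> Null (X ++ Y).
Proof.
  intros [L1 H1] [L2 H2]. exists (L1 ++ L2). rewrite op_opp_app.
  eapply perm_trans. apply Permutation_app; eauto.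
  rewrite <- !app_assoc. apply Permutation_app_head. rewrite !app_assoc.
  apply Permutation_app_tail. apply Permutation_app_comm.
Qed.

Lemma Null_opp X : Null X -> Null (op_opp X).
Proof.
  intros [L H]. exists (op_opp L). rewrite op_opp_opp.
  eapply perm_trans. apply Permutation_map. exact H.
  fold (op_opp (L ++ op_opp L)). rewrite op_opp_app, op_opp_opp. auto.
Qed.

Lemma Null_mul_l P X : Null X -> Null (op_mul P X).
Proof.
  intros [L H]. exists (op_mul P L). eapply perm_trans. apply op_mul_perm_r. exact H.
  rewrite <- op_mul_opp_r. apply op_mul_app_r.
Qed.

Lemma Null_mul_r P X : Null X -> Null (op_mul X P).
Proof.
  intros [L H]. exists (op_mul L P). eapply perm_trans. apply op_mul_perm_l. exact H.
  rewrite op_mul_app_l, op_mul_opp_l. auto.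
Qed.
Lemma perm4 {T} (A B C D : list T) : Permutation ((A ++ B) ++ (C ++ D)) ((A ++ C) ++ (B ++ D)).
Proof.
  rewrite <- !app_assoc. apply Permutation_app_head. rewrite !app_assoc.
  apply Permutation_app_tail. apply Permutation_app_comm.
Qed.

Lemma opp_perm A B : Permutation A B -> Permutation (op_opp A) (op_opp B).
Proof. intros; now apply Permutation_map. Qed.

Lemma mul_decomp P Q G1 N1 G2 N2 : Permutation P (G1 ++ N1) -> Null N1 ->
  Permutation Q (G2 ++ N2) -> Null N2 ->
  exists X, Null X /\ Permutation (op_mul P Q) (op_mul G1 G2 ++ X).
Proof.
  intros H1 HN1 H2 HN2. exists (op_mul G1 N2 ++ op_mul N1 (G2 ++ N2)). split.
  - apply Null_app. now apply Null_mul_l. now apply Null_mul_r.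
  - eapply perm_trans. apply op_mul_perm_l, H1.
    eapply perm_trans. apply op_mul_perm_r, H2.
    rewrite op_mul_app_l, app_assoc. apply Permutation_app_tail. apply op_mul_app_r.
Qed.

Definition j0 (a b : mono) : mono :=
  let '(y, m, d) := a in let '(z, n, e) := b in
  ((fun x => y x * z x), (m + n)%Z, (d + e)%nat).
Definition tl (a b : mono) : op :=
  let '(y, m, d) := a in let '(z, n, e) := b in
  map (fun j => ((fun x => Binomial.C d j * y x * Derive_n z j x),
                 (m + n)%Z, (d - j + e)%nat)) (seq 1 d).

Lemma mono_mul_split a b : mono_mul a b = j0 a b :: tl a b.
Proof.
  destruct a as [[y m] d], b as [[z n] e]. unfold mono_mul. simpl.
  replace (fun x => Binomial.C d 0 * y x * z x) with (fun x => y x * z x); [now rewrite Nat.sub_0_r|].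
  apply functional_extensionality; intros x. rewrite C_n_0. lra.
Qed.

Lemma j0_sym a b : j0 a b = j0 b a.
Proof.
  destruct a as [[y m] d], b as [[z n] e]. simpl. rewrite Z.add_comm, Nat.add_comm.
  replace (fun x => y x * z x) with (fun x => z x * y x); auto.
  apply functional_extensionality; intros x. lra.
Qed.

Definition J0 P Q := flat_map (fun a => flat_map (fun b => (j0 a b :: nil)) Q) P.
Definition TT P Q := flat_map (fun a => flat_map (fun b => tl a b) Q) P.

Lemma op_mul_split P Q : Permutation (op_mul P Q) (J0 P Q ++ TT P Q).
Proof.
  unfold op_mul, J0, TT. eapply perm_trans. 2: apply perm_flat_map_app.
  apply perm_flat_map_ext. intros a.
  eapply perm_trans. 2: apply (perm_flat_map_app (fun b => (j0 a b :: nil)) (tl a)).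
  apply perm_flat_map_ext. intros b. rewrite mono_mul_split. auto.
Qed.

Lemma J0_swap P Q : Permutation (J0 Q P) (J0 P Q).
Proof.
  unfold J0. eapply perm_trans. 2: apply Permutation_sym, (perm_swap2 j0 P Q).
  apply perm_flat_map_ext; intros b. apply perm_flat_map_ext; intros a.
  rewrite j0_sym. auto.
Qed.

Definition Good (K M : Z) (G : op) : Prop :=
  List.Forall (fun a => snd (fst a) = M /\ (Z.of_nat (snd a) - snd (fst a) <= K)%Z) G.

Lemma Good_app K M A B : Good K M A -> Good K M B -> Good K M (A ++ B).
Proof. intros; apply List.Forall_app; auto. Qed.

Lemma Good_opp K M A : Good K M A -> Good K M (op_opp A).
Proof.
  unfold Good, op_opp. intros H. apply List.Forall_map. eapply List.Forall_impl. 2: exact H.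
  intros [[y m] d]. simpl. auto.
Qed.

Lemma Good_TT K1 M1 K2 M2 P Q : Good K1 M1 P -> Good K2 M2 Q ->
  Good (K1 + K2 - 1) (M1 + M2) (TT P Q).
Proof.
  unfold Good, TT. rewrite !List.Forall_forall. intros HP HQ c Hc.
  apply in_flat_map in Hc as [a [Ha Hc]]. apply in_flat_map in Hc as [b [Hb Hc]].
  specialize (HP a Ha). specialize (HQ b Hb).
  destruct a as [[y m] d], b as [[z n] e]. simpl in *.
  apply in_map_iff in Hc as [j [<- Hj]]. apply in_seq in Hj. simpl. lia.
Qed.

Definition Inv (K : Z) (P : op) : Prop :=
  exists M G N, Permutation P (G ++ N) /\ Null N /\ Good K M G.

Lemma Inv_comm K1 K2 P Q : Inv K1 P -> Inv K2 Q -> Inv (K1 + K2 - 1) (comm P Q).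
Proof.
  intros [M1 [G1 [N1 [H1 [HN1 HG1]]]]] [M2 [G2 [N2 [H2 [HN2 HG2]]]]].
  destruct (mul_decomp P Q G1 N1 G2 N2) as [X [HX PX]]; auto.
  destruct (mul_decomp Q P G2 N2 G1 N1) as [Y [HY PY]]; auto.
  exists (M1 + M2)%Z, (TT G1 G2 ++ op_opp (TT G2 G1)),
    ((J0 G1 G2 ++ op_opp (J0 G1 G2)) ++ (X ++ op_opp Y)).
  split; [|split].
  - unfold comm. eapply perm_trans. apply Permutation_app. exact PX. apply opp_perm. exact PY.
    rewrite op_opp_app.
    eapply perm_trans. apply perm4.
    eapply perm_trans. apply Permutation_app_tail.
    apply Permutation_app. apply op_mul_split. apply opp_perm. apply op_mul_split.
    rewrite op_opp_app. rewrite (app_assoc (TT G1 G2 ++ _)).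
    apply Permutation_app_tail.
    eapply perm_trans. apply perm4.
    eapply perm_trans. apply Permutation_app_comm.
    apply Permutation_app_head. apply Permutation_app_head. apply opp_perm. apply J0_swap.
  - apply Null_app. exists (J0 G1 G2). auto. apply Null_app; auto. now apply Null_opp.
  - apply Good_app. now apply Good_TT. apply Good_opp.
    replace (K1 + K2 - 1)%Z with (K2 + K1 - 1)%Z by lia.
    replace (M1 + M2)%Z with (M2 + M1)%Z by lia. now apply Good_TT.
Qed.

Lemma coef_app A B m d x : coef (A ++ B) m d x = coef A m d x + coef B m d x.
Proof.
  induction A as [|[[y m'] d'] A IH]; simpl. lra.
  destruct (Z.eqb m m' && Nat.eqb d d')%bool; rewrite IH; lra.
Qed.

Lemma coef_opp A m d x : coef (op_opp A) m d x = - coef A m d x.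
Proof.
  induction A as [|[[y m'] d'] A IH]; simpl. lra.
  destruct (Z.eqb m m' && Nat.eqb d d')%bool; rewrite IH; lra.
Qed.

Lemma coef_perm A B m d x : Permutation A B -> coef A m d x = coef B m d x.
Proof.
  induction 1 as [| [[y m'] d'] l l' _ IH | [[y m1] d1] [[z m2] d2] l | l l' l'' _ IH1 _ IH2]; simpl.
  - auto.
  - rewrite IH. auto.
  - destruct (Z.eqb m m1 && Nat.eqb d d1)%bool, (Z.eqb m m2 && Nat.eqb d d2)%bool; lra.
  - congruence.
Qed.

Lemma coef_null N m d x : Null N -> coef N m d x = 0.
Proof.
  intros [L H]. rewrite (coef_perm _ _ m d x H), coef_app, coef_opp. lra.
Qed.

Lemma coef_good K M G m d x : Good K M G -> coef G m d x <> 0 ->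
  m = M /\ (Z.of_nat d - m <= K)%Z.
Proof.
  unfold Good. induction G as [|[[y m'] d'] G IH]; simpl; intros HG Hc.
  - lra.
  - inversion HG as [|? ? Ha HG']; subst. simpl in Ha.
    destruct (Z.eqb m m' && Nat.eqb d d')%bool eqn:E.
    + apply andb_prop in E as [E1 E2]. apply Z.eqb_eq in E1. apply Nat.eqb_eq in E2. subst. auto.
    + auto.
Qed.

Lemma Inv_U V b : Inv 1 (U V b).
Proof.
  exists (if b then 1%Z else (-1)%Z), (U V b), nil. split; [rewrite app_nil_r; auto|split].
  apply Null_nil. destruct b; unfold Good; simpl; constructor; simpl; auto; lia.
Qed.

Lemma Inv_Oq q y : Inv 0 (Oq q y).
Proof.
  exists (Z.of_nat q), (Oq q y), nil. split; [rewrite app_nil_r; auto|split].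
  apply Null_nil. unfold Good, Oq. constructor; simpl; auto; lia.
Qed.

Lemma Inv_nil : Inv 1 nil.
Proof. exists 0%Z, nil, nil. split; auto. split. apply Null_nil. constructor. Qed.

Lemma Inv_nested V us : Inv 1 (nested_comm V us).
Proof.
  destruct us as [|u rest]; simpl. apply Inv_nil.
  generalize (U V u) (Inv_U V u). induction rest as [|b rest IH]; simpl; auto.
  intros acc Hacc. apply IH. replace 1%Z with (1 + 1 - 1)%Z by lia.
  apply Inv_comm; auto. apply Inv_U.
Qed.

Lemma Inv_Wk V Cs q y : Inv 0 (Wk V Cs q y).
Proof.
  unfold Wk. generalize (Oq q y) (Inv_Oq q y). induction Cs as [|us Cs IH]; simpl; auto.
  intros W HW. apply IH. replace 0%Z with (1 + 0 - 1)%Z by lia.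
  apply Inv_comm; auto. apply Inv_nested.
Qed.

Lemma final P : Inv 0 P -> ht_le_wd (ht P) (wd P).
Proof.
  intros [M [G [N [HP [HN HG]]]]].
  assert (Hap : forall m d, appears P m d -> m = M /\ (Z.of_nat d <= M)%Z).
  { intros m d [x Hx]. rewrite (coef_perm _ _ m d x HP), coef_app, (coef_null N) in Hx; auto.
    assert (Hc : coef G m d x <> 0) by (intro E; apply Hx; rewrite E; lra). destruct (coef_good _ _ _ m d x HG Hc) as [H1 H2]. split; auto; lia. }
  assert (Hgen : forall l : op,
    let w := fold_right (fun '(((_, m), d) : mono) acc =>
                if excluded_middle_informative (appears P m d)
                then match acc with None => Some m | Some w => Some (Z.min m w) end
                else acc) None l in
    let h := fold_right (fun '(((_, m), d) : mono) acc =>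
                if excluded_middle_informative (appears P m d)
                then Nat.max d acc else acc) 0%nat l in
    (w = None /\ h = 0%nat) \/ (w = Some M /\ (Z.of_nat h <= M)%Z)).
  { induction l as [|[[y m] d] l IH]; simpl. auto.
    destruct (excluded_middle_informative (appears P m d)) as [Ha|Ha].
    - destruct (Hap _ _ Ha) as [-> Hd]. right.
      destruct IH as [[-> ->]|[-> Hh]]; split; try f_equal; try lia.
    - exact IH. }
  assert (Hx : (wd P = None /\ ht P = 0%nat) \/ (wd P = Some M /\ (Z.of_nat (ht P) <= M)%Z))
    by exact (Hgen P).
  destruct Hx as [[-> _]|[-> Hh]]; simpl; auto.
Qed.
End Aux.

Theorem theorem4p3 (V : R -> R) (hV : smooth V) (q : nat) (yq : R -> R)
  (hy : smooth yq) (Cs : list (list bool))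
  (hCs : Forall (fun us => (2 <= length us)%nat) Cs) :
  ht_le_wd (ht (Wk V Cs q yq)) (wd (Wk V Cs q yq)).
Proof.
  apply Aux.final, Aux.Inv_Wk.
Qed.
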